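(* Let $\phi:Z\to[-\infty,+\infty]$ be proper and closed, and suppose Assumptions (A1) and (A2) hold for some $\lambda\in\mathbb R$. Let $\tau\in(0,1/\lambda^-)$, write $J_\tau z=(J^X_\tau z,J^Y_\tau z)$. Then for every $z=(x,y)\in Z$ and every $z'=(x',y')\in D\phi$: $\frac{\mathsf d_X^2(J^X_\tau z,x')-\mathsf d_X^2(x,x')}{2\tau}+\frac\lambda2\mathsf d_X^2(J^X_\tau z,x')+\phi(J^X_\tau z,J^Y_\tau z)\le\phi(x',J^Y_\tau z)-\frac1{2\tau}\mathsf d_X^2(J^X_\tau z,x)$, $\frac{\mathsf d_Y^2(J^Y_\tau z,y')-\mathsf d_Y^2(y,y')}{2\tau}+\frac\lambda2\mathsf d_Y^2(J^Y_\tau z,y')+\phi(J^X_\tau z,y')\le\phi(J^X_\tau z,J^Y_\tau z)-\frac1{2\tau}\mathsf d_Y^2(J^Y_\tau z,y)$.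
   Context: $(X,\mathsf d_X)$, $(Y,\mathsf d_Y)$ complete metric spaces; $Z=X\times Y$. $D_X\phi=\{x:\phi(x,y)<+\infty\ \forall y\}$, $D_Y\phi=\{y:\phi(x,y)>-\infty\ \forall x\}$, $D\phi=D_X\phi\times D_Y\phi$; proper: $D\phi\ne\emptyset$; closed: for $x\in D_X\phi$, $y\mapsto\phi(x,y)$ upper semicontinuous, for $y\in D_Y\phi$, $x\mapsto\phi(x,y)$ lower semicontinuous. (A1): $\phi=+\infty$ on $(X\setminus D_X\phi)\times D_Y\phi$, $\phi=-\infty$ on $D_X\phi\times(Y\setminus D_Y\phi)$. $\lambda^-=\max\{-\lambda,0\}$, $1/\lambda^-:=+\infty$ if $\lambda^-=0$. $\Phi_\tau(x,y;x',y')=\phi(x',y')+\frac1{2\tau}(\mathsf d_X^2(x',x)-\mathsf d_Y^2(y',y))$. $f$ on $Z$ is $\mu$-convex-concave along curves $\gamma,\sigma$ if for all $t\in[0,1]$: $f(\gamma_t,y)\le(1-t)f(\gamma_0,y)+tf(\gamma_1,y)-\frac\mu2t(1-t)\mathsf d_X^2(\gamma_0,\gamma_1)$ for all $y$ and $f(x,\sigma_t)\ge(1-t)f(x,\sigma_0)+tf(x,\sigma_1)+\frac\mu2t(1-t)\mathsf d_Y^2(\sigma_0,\sigma_1)$ for all $x$. (A2) for $\lambda$: for every $(x,y)\in Z$, $(x_0,y_0),(x_1,y_1)\in D\phi$ there are continuous curves $\gamma$ from $x_0$ to $x_1$, $\sigma$ from $y_0$ to $y_1$ such that for all $\tau\in(0,1/\lambda^-)$,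 $(x',y')\mapsto\Phi_\tau(x,y;x',y')$ is $(\tau^{-1}+\lambda)$-convex-concave along them. Resolvent: $J_\tau z$ is the (unique, existing under these assumptions) saddle point of $z'\mapsto\Phi_\tau(z;z')$, i.e. the point $(\bar x,\bar y)$ with $\Phi_\tau(z;\bar x,y')\le\Phi_\tau(z;\bar x,\bar y)\le\Phi_\tau(z;x',\bar y)$ for all $(x',y')\in Z$. *)

(* Defs.v *)
From HB Require Import structures.
From mathcomp Require Import all_boot all_order all_algebra.
From mathcomp Require Import all_classical all_reals.

Set Implicit Arguments. Unset Strict Implicit. Unset Printing Implicit Defensive.
Import Order.TTheory GRing.Theory Num.Theory.
Local Open Scope ring_scope.
Local Open Scope ereal_scope.

Record metric_space (R : realType) := MetricSpace {
  mcarrier :> Type;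
  mdist : mcarrier -> mcarrier -> R;
  mdist_ge0 : forall x y, (0 <= mdist x y)%R;
  mdist_eq0 : forall x y, mdist x y = 0%R <-> x = y;
  mdist_sym : forall x y, mdist x y = mdist y x;
  mdist_tri : forall x y z, (mdist x z <= mdist x y + mdist y z)%R;
  mcomplete : forall u : nat -> mcarrier,
    (forall e : R, (0 < e)%R -> exists N : nat, forall m n : nat,
        (N <= m)%N -> (N <= n)%N -> (mdist (u m) (u n) < e)%R) ->
    exists l : mcarrier, forall e : R, (0 < e)%R -> exists N : nat,
        forall n : nat, (N <= n)%N -> (mdist (u n) l < e)%R
}.
Arguments mdist {R} m _ _.

Section Defs.
Variables (R : realType) (X Y : metric_space R).
Implicit Types (phi : X -> Y -> \bar R).

Definition DX phi (x : X) : Prop := forall y : Y, phi x y < +oo.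
Definition DY phi (y : Y) : Prop := forall x : X, -oo < phi x y.
Definition Dphi phi (x : X) (y : Y) : Prop := DX phi x /\ DY phi y.

Definition proper_sp phi : Prop := exists x y, Dphi phi x y.

Definition usc (T : metric_space R) (f : T -> \bar R) : Prop :=
  forall (t : T) (c : R), f t < c%:E ->
    exists2 d : R, (0 < d)%R & forall s : T, (mdist T s t < d)%R -> f s < c%:E.
Definition lsc (T : metric_space R) (f : T -> \bar R) : Prop :=
  forall (t : T) (c : R), c%:E < f t ->
    exists2 d : R, (0 < d)%R & forall s : T, (mdist T s t < d)%R -> c%:E < f s.

Definition closed_sp phi : Prop :=
  (forall x, DX phi x -> usc (fun y => phi x y)) /\
  (forall y, DY phi y -> lsc (fun x => phi x y)).

Definition A1 phi : Prop :=
  (forall x y, ~ DX phi x -> DY phi y -> phi x y = +oo) /\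
  (forall x y, DX phi x -> ~ DY phi y -> phi x y = -oo).

Definition lam_minus (lam : R) : R := (Num.max (- lam) 0)%R.

(* tau in (0, 1/lambda^-), with 1/lambda^- = +oo when lambda^- = 0 *)
Definition tau_adm (lam tau : R) : Prop :=
  (0 < tau)%R /\ (lam_minus lam = 0%R \/ (tau < 1 / lam_minus lam)%R).

Definition Phi_tau phi (tau : R) (x : X) (y : Y) (x' : X) (y' : Y) : \bar R :=
  phi x' y' + ((mdist X x' x ^+ 2 - mdist Y y' y ^+ 2) / (2 * tau))%:E.

Definition curve_cont (T : metric_space R) (g : R -> T) : Prop :=
  forall t : R, (0 <= t <= 1)%R -> forall e : R, (0 < e)%R ->
    exists2 d : R, (0 < d)%R & forall s : R, (0 <= s <= 1)%R ->
      (`|s - t| < d)%R -> (mdist T (g s) (g t) < e)%R.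

Definition cvx_ccv_along (f : X -> Y -> \bar R) (mu : R)
    (gam : R -> X) (sig : R -> Y) : Prop :=
  forall t : R, (0 <= t <= 1)%R ->
    (forall y : Y, f (gam t) y <=
        (1 - t)%:E * f (gam 0%R) y + t%:E * f (gam 1%R) y
        - (mu / 2 * t * (1 - t) * mdist X (gam 0%R) (gam 1%R) ^+ 2)%:E) /\
    (forall x : X, f x (sig t) >=
        (1 - t)%:E * f x (sig 0%R) + t%:E * f x (sig 1%R)
        + (mu / 2 * t * (1 - t) * mdist Y (sig 0%R) (sig 1%R) ^+ 2)%:E).

Definition A2 phi (lam : R) : Prop :=
  forall (x : X) (y : Y) (x0 : X) (y0 : Y) (x1 : X) (y1 : Y),
    Dphi phi x0 y0 -> Dphi phi x1 y1 ->
    exists (gam : R -> X) (sig : R -> Y),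
      [/\ curve_cont gam, curve_cont sig,
          gam 0%R = x0 /\ gam 1%R = x1, sig 0%R = y0 /\ sig 1%R = y1 &
          forall tau : R, tau_adm lam tau ->
            cvx_ccv_along (Phi_tau phi tau x y) (tau^-1 + lam) gam sig].

(* (xb, yb) is a saddle point of z' |-> Phi_tau(z; z'); the resolvent J_tau z
   is (by the paper) the unique such point. *)
Definition is_saddle phi (tau : R) (x : X) (y : Y) (xb : X) (yb : Y) : Prop :=
  forall (x' : X) (y' : Y),
    Phi_tau phi tau x y xb y' <= Phi_tau phi tau x y xb yb /\
    Phi_tau phi tau x y xb yb <= Phi_tau phi tau x y x' yb.

End Defs.

(* Main.v *)
Require Import Defs.
From mathcomp Require Import all_boot all_order all_algebra.
From mathcomp Require Import all_classical all_reals.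
From mathcomp Require Import ring lra.

Import Order.TTheory GRing.Theory Num.Theory.
Local Open Scope ring_scope.
Lemma lim_aux (R : realType) (a b c : R) :
  (forall t : R, (0 < t <= 1)%R -> (a <= b + c * t)%R) -> (a <= b)%R.
Proof.
move=> H.
have [c0|c0] := leP c 0%R.
  have := H 1%R; rewrite ltr01 lexx => /(_ isT); lra.
rewrite leNgt; apply/negP => ab.
pose t := Num.min 1%R ((a - b) / (2 * c)).
have t0 : (0 < t)%R by rewrite lt_min ltr01 /= divr_gt0 ?subr_gt0 //; lra.
have t1 : (t <= 1)%R by rewrite ge_min lexx.
have t2 : (t <= (a - b) / (2 * c))%R by rewrite ge_min lexx orbT.
have := H t; rewrite t0 t1 => /(_ isT) h.
have : (c * t <= (a - b) / 2)%R.
  rewrite -(@ler_pM2l _ (2 * c)%R) in t2; last lra.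
  rewrite mulrCA divff in t2; last by apply/eqP; lra.
  lra.
lra.
Qed.

Lemma stepX (R : realType) (p0 p1 a b c D l k t : R) : 0 < t ->
  p0 + (a - b) * k <= (1 - t) * (p0 + (a - b) * k) + t * (p1 + (c - b) * k)
     - (2 * k + l) / 2 * t * (1 - t) * D ->
  (D - c) * k + l / 2 * D + p0 <= p1 - a * k + (2 * k + l) / 2 * D * t.
Proof.
move=> t0 h.
have : 0 <= t * ((p1 - a * k + (2 * k + l) / 2 * D * t) - ((D - c) * k + l / 2 * D + p0)).
  have -> : t * ((p1 - a * k + (2 * k + l) / 2 * D * t) - ((D - c) * k + l / 2 * D + p0))
    = ((1 - t) * (p0 + (a - b) * k) + t * (p1 + (c - b) * k)
     - (2 * k + l) / 2 * t * (1 - t) * D) - (p0 + (a - b) * k) by field.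
  lra.
by rewrite pmulr_rge0 // subr_ge0.
Qed.

Lemma stepY (R : realType) (p0 p1 a b c D l k t : R) : 0 < t ->
  (1 - t) * (p0 + (a - b) * k) + t * (p1 + (a - c) * k)
     + (2 * k + l) / 2 * t * (1 - t) * D <= p0 + (a - b) * k ->
  (D - c) * k + l / 2 * D + p1 <= p0 - b * k + (2 * k + l) / 2 * D * t.
Proof.
move=> t0 h.
have : 0 <= t * ((p0 - b * k + (2 * k + l) / 2 * D * t) - ((D - c) * k + l / 2 * D + p1)).
  have -> : t * ((p0 - b * k + (2 * k + l) / 2 * D * t) - ((D - c) * k + l / 2 * D + p1))
    = (p0 + (a - b) * k) - ((1 - t) * (p0 + (a - b) * k) + t * (p1 + (a - c) * k)
     + (2 * k + l) / 2 * t * (1 - t) * D) by field.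
  lra.
by rewrite pmulr_rge0 // subr_ge0.
Qed.

Local Open Scope ereal_scope.

Lemma finE (R : realType) (e : \bar R) : -oo < e -> e < +oo -> e = (fine e)%:E.
Proof. by move=> h1 h2; rewrite fineK //; apply/fin_numPlt; rewrite h1 h2. Qed.

Arguments finE {R e}.

Theorem mainTheorem10 (R : realType) (X Y : metric_space R)
  (phi : X -> Y -> \bar R) (lam tau : R) :
  proper_sp phi -> closed_sp phi -> A1 phi -> A2 phi lam ->
  tau_adm lam tau ->
  forall (x : X) (y : Y) (Jx : X) (Jy : Y),
    is_saddle phi tau x y Jx Jy ->
  forall (x' : X) (y' : Y), Dphi phi x' y' ->
    ((mdist X Jx x' ^+ 2 - mdist X x x' ^+ 2) / (2 * tau)
       + lam / 2 * mdist X Jx x' ^+ 2)%:E + phi Jx Jy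
      <= phi x' Jy - (mdist X Jx x ^+ 2 / (2 * tau))%:E
  /\
    ((mdist Y Jy y' ^+ 2 - mdist Y y y' ^+ 2) / (2 * tau)
       + lam / 2 * mdist Y Jy y' ^+ 2)%:E + phi Jx y'
      <= phi Jx Jy - (mdist Y Jy y ^+ 2 / (2 * tau))%:E.
Proof.
move=> [x0 [y0 [Dx0 Dy0]]] _ _ HA2 Htau x y Jx Jy Hs x' y' [Dx' Dy'].
have tau0 : (0 < tau)%R by case: Htau.
have DJx : DX phi Jx.
  move=> y1; have [h1 _] := Hs x0 y1; have [_ h2] := Hs x0 Jy.
  move: (Dx0 Jy) (le_trans h1 h2); rewrite /Phi_tau.
  case: (phi x0 Jy) => [r||] //; case: (phi Jx y1) => [s||] //; rewrite ?ltry ?ltNyr //.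
have DJy : DY phi Jy.
  move=> x1; have [_ h1] := Hs x1 y0; have [h2 _] := Hs x1 y0.
  move: (Dy0 Jx) (le_trans h2 h1); rewrite /Phi_tau.
  case: (phi Jx y0) => [r||] //; case: (phi x1 Jy) => [s||] //; rewrite ?ltNyr ?ltry //.
have e00 := finE (DJy Jx) (DJx Jy).
have e10 := finE (DJy x') (Dx' Jy).
have e01 := finE (Dy' Jx) (DJx y').
set p00 := fine (phi Jx Jy) in e00.
set p10 := fine (phi x' Jy) in e10.
set p01 := fine (phi Jx y') in e01.
have [gam [sig [_ _ [g0 g1] [s0 s1] Hc]]] :=
  HA2 x y Jx Jy x' y' (conj DJx DJy) (conj Dx' Dy').
have Hc' := Hc tau Htau.
rewrite e00 e10 e01; split.
  rewrite -EFinN -!EFinD lee_fin.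
  set D := mdist X Jx x'.
  apply: (@lim_aux _ _ _ ((tau^-1 + lam) / 2 * D ^+ 2)) => t /andP [t0 t1].
  have t01 : (0 <= t <= 1)%R by rewrite (ltW t0) t1.
  have [cv _] := Hc' t t01.
  have := le_trans (proj2 (Hs (gam t) Jy)) (cv Jy).
  rewrite /Phi_tau g0 g1 e00 e10 -/D.
  rewrite -?EFinN -?EFinD -?EFinM -?EFinN -?EFinD -?EFinM -?EFinD lee_fin => h.
  have ek : (tau^-1 = 2 * (2 * tau)^-1)%R by field; rewrite gt_eqF.
  rewrite ek (mdist_sym x' x) in h; rewrite ek.
  have := @stepX R p00 p10 (mdist X Jx x ^+ 2)%R (mdist Y Jy y ^+ 2)%R (mdist X x x' ^+ 2)%R (D ^+ 2)%R lam (2 * tau)^-1%R t t0 => H; exact: (H h).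
- rewrite -EFinN -!EFinD lee_fin.
  set D := mdist Y Jy y'.
  apply: (@lim_aux _ _ _ ((tau^-1 + lam) / 2 * D ^+ 2)) => t /andP [t0 t1].
  have t01 : (0 <= t <= 1)%R by rewrite (ltW t0) t1.
  have [_ cc] := Hc' t t01.
  have := le_trans (cc Jx) (proj1 (Hs Jx (sig t))).
  rewrite /Phi_tau s0 s1 e00 e01 -/D.
  rewrite -?EFinN -?EFinD -?EFinM -?EFinN -?EFinD -?EFinM -?EFinD lee_fin => h.
  have ek : (tau^-1 = 2 * (2 * tau)^-1)%R by field; rewrite gt_eqF.
  rewrite ek (mdist_sym y' y) in h; rewrite ek.
  have := @stepY R p00 p01 (mdist X Jx x ^+ 2)%R (mdist Y Jy y ^+ 2)%R (mdist Y y y' ^+ 2)%R (D ^+ 2)%R lam (2 * tau)^-1%R t t0 => H; exact: (H h).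
Qed.
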